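(* Let $\mathcal{E}$ be a finite-dimensional real vector space with norm $\|\cdot\|_{\mathcal{E}}$, $X\subseteq\mathcal{E}$ a closed convex set, $h:X\to\mathbb{R}$ convex, and $d$ a prox-function on $X$ (as in the context) with subgradient selection $d'$ on $X^0$. Let $\bar x\in X^0$, $g\in\mathcal{E}^*$, $\gamma>0$, $\delta_{pc}>0$, $\delta_{pu}>0$, and let $\tilde x\in X^0$ be such that there exists $p\in\partial h(\tilde x)$ with $$\Big\langle g+\tfrac{1}{\gamma}\big[d'(\tilde x)-d'(\bar x)\big]+p,\;u-\tilde x\Big\rangle\ge-\delta_{pc}-\delta_{pu}\quad\forall u\in X.$$ Set $g_X:=\frac{1}{\gamma}(\bar x-\tilde x)$. Then $$\gamma\langle g,g_X\rangle\ge\gamma\|g_X\|_{\mathcal{E}}^2+\big(h(\tilde x)-h(\bar x)\big)-\delta_{pc}-\delta_{pu}.$$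
   Context: A prox-function $d$ on $X$ is a continuous convex function on $X$ which admits a selection of subgradients $d'(x)$ continuous in $x\in X^0$, where $X^0\subseteq X$ is the set of points at which $d'(x)$ exists, and which is $1$-strongly convex w.r.t. $\|\cdot\|_{\mathcal{E}}$: $d(y)-d(x)-\langle d'(x),y-x\rangle\ge\frac12\|y-x\|_{\mathcal{E}}^2$ for all $x\in X^0$, $y\in X$. $\langle g,x\rangle$ is the value of $g\in\mathcal{E}^*$ at $x\in\mathcal{E}$. *)

(* Defs.v *)
From HB Require Import structures.
From mathcomp Require Import all_boot all_order all_algebra.
From mathcomp Require Import all_classical all_reals all_analysis.
Set Implicit Arguments. Unset Strict Implicit. Unset Printing Implicit Defensive.
Import Order.TTheory GRing.Theory Num.Theory.
Import numFieldNormedType.Exports.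
Local Open Scope classical_set_scope.
Local Open Scope ring_scope.

(* The finite-dimensional real space E is modelled as 'rV[R]_n; its dual E^*
   is identified with 'rV[R]_n via the standard (nondegenerate) pairing. *)
Definition pairing (R : realType) (n : nat) (g x : 'rV[R]_n) : R :=
  \sum_(i < n) g ord0 i * x ord0 i.

Definition is_norm (R : realType) (n : nat) (N : 'rV[R]_n -> R) : Prop :=
  [/\ forall x y, N (x + y) <= N x + N y,
      forall (a : R) x, N (a *: x) = `|a| * N x &
      forall x, N x = 0 -> x = 0].

Definition is_convex_set (R : realType) (n : nat) (X : set 'rV[R]_n) : Prop :=
  forall x y (t : R), X x -> X y -> 0 <= t <= 1 ->
    X (t *: x + (1 - t) *: y).

Definition convex_on (R : realType) (n : nat) (X : set 'rV[R]_n)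
  (f : 'rV[R]_n -> R) : Prop :=
  forall x y (t : R), X x -> X y -> 0 <= t <= 1 ->
    f (t *: x + (1 - t) *: y) <= t * f x + (1 - t) * f y.

Definition subgrad (R : realType) (n : nat) (X : set 'rV[R]_n)
  (f : 'rV[R]_n -> R) (x p : 'rV[R]_n) : Prop :=
  X x /\ forall y, X y -> f y >= f x + pairing p (y - x).

Definition X0 (R : realType) (n : nat) (X : set 'rV[R]_n)
  (d : 'rV[R]_n -> R) : set 'rV[R]_n :=
  [set x | exists p, subgrad X d x p].

Definition prox_function (R : realType) (n : nat) (N : 'rV[R]_n -> R)
  (X : set 'rV[R]_n) (d : 'rV[R]_n -> R) (d' : 'rV[R]_n -> 'rV[R]_n) : Prop :=
  [/\ {within X, continuous d},
      convex_on X d,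
      (forall x, X0 X d x -> subgrad X d x (d' x)),
      {within X0 X d, continuous d'} &
      (forall x y, X0 X d x -> X y ->
         d y - d x - pairing (d' x) (y - x) >= 2^-1 * N (y - x) ^+ 2)].

(* Main.v *)
Require Import Defs.
From HB Require Import structures.
From mathcomp Require Import all_boot all_order all_algebra.
From mathcomp Require Import all_classical all_reals all_analysis.
From mathcomp Require Import lra.
Import Order.TTheory GRing.Theory Num.Theory.
Import numFieldNormedType.Exports.
Local Open Scope classical_set_scope.
Local Open Scope ring_scope.

Lemma pairingDl (R : realType) (n : nat) (a b x : 'rV[R]_n) :
  pairing (a + b) x = pairing a x + pairing b x.
Proof. by rewrite /pairing -big_split; apply: eq_bigr => i _; rewrite mxE mulrDl. Qed.

Lemma pairingZl (R : realType) (n : nat) (c : R) (a x : 'rV[R]_n) :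
  pairing (c *: a) x = c * pairing a x.
Proof. by rewrite /pairing mulr_sumr; apply: eq_bigr => i _; rewrite mxE mulrA. Qed.

Lemma pairingZr (R : realType) (n : nat) (c : R) (a x : 'rV[R]_n) :
  pairing a (c *: x) = c * pairing a x.
Proof. by rewrite /pairing mulr_sumr; apply: eq_bigr => i _; rewrite mxE mulrCA. Qed.

Lemma pairingNl (R : realType) (n : nat) (a x : 'rV[R]_n) :
  pairing (- a) x = - pairing a x.
Proof. by rewrite -scaleN1r pairingZl mulN1r. Qed.

Lemma pairingNr (R : realType) (n : nat) (a x : 'rV[R]_n) :
  pairing a (- x) = - pairing a x.
Proof. by rewrite -scaleN1r pairingZr mulN1r. Qed.

Theorem lemma2 (R : realType) (n : nat) (N : 'rV[R]_n -> R)
  (X : set 'rV[R]_n) (h d : 'rV[R]_n -> R) (d' : 'rV[R]_n -> 'rV[R]_n)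
  (xbar xt g : 'rV[R]_n) (gamma dpc dpu : R) :
  is_norm N -> closed X -> is_convex_set X -> convex_on X h ->
  prox_function N X d d' ->
  X0 X d xbar -> 0 < gamma -> 0 < dpc -> 0 < dpu -> X0 X d xt ->
  (exists p, subgrad X h xt p /\
     forall u, X u ->
       pairing (g + gamma^-1 *: (d' xt - d' xbar) + p) (u - xt) >= - dpc - dpu) ->
  gamma * pairing g (gamma^-1 *: (xbar - xt)) >=
    gamma * N (gamma^-1 *: (xbar - xt)) ^+ 2 + (h xt - h xbar) - dpc - dpu.
Proof.
move=> [_ NZ _] _ _ _ [_ _ _ _ sc] Xb gp _ _ Xt [p [[_ hp] Hu]].
have Xxb : X xbar by case: Xb => q [].
have Xxt : X xt by case: Xt => q [].
have H1 := Hu _ Xxb.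
have H2 := hp _ Xxb.
have S1 := sc _ _ Xt Xxb.
have S2 := sc _ _ Xb Xxt.
have E : xt - xbar = - (xbar - xt) by rewrite opprB.
rewrite E -scaleN1r NZ normrN normr1 mul1r scaleN1r pairingNr in S2.
rewrite !pairingDl pairingZl pairingDl pairingNl in H1.
rewrite NZ pairingZr exprMn.
set v := xbar - xt in H1 H2 S1 S2 *.
have gi : 0 < gamma^-1 by rewrite invr_gt0.
rewrite (gtr0_norm gi).
have ga : gamma * gamma^-1 = 1 by rewrite divff ?gt_eqF.
set a := gamma^-1 in H1 gi ga *.
set D := pairing (d' xt) v - pairing (d' xbar) v.
have HD : D <= - N v ^+ 2.
  rewrite /D; move: S1 S2; set A := d xbar; set B := d xt; set P1 := pairing (d' xt) v;
  set P2 := pairing (d' xbar) v; set M := N v ^+ 2; lra.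
have HaD : a * D <= a * (- N v ^+ 2) by rewrite ler_pM2l.
have -> : gamma * (a * pairing g v) = pairing g v by rewrite mulrA ga mul1r.
have -> : gamma * (a ^+ 2 * N v ^+ 2) = a * N v ^+ 2 by rewrite expr2 !mulrA ga mul1r.
rewrite /D mulrN in HaD.
move: HaD H1 H2; rewrite -!(addrA (pairing g v)).
set P1 := pairing (d' xt) v; set P2 := pairing (d' xbar) v; set M := N v ^+ 2.
set Q := pairing p v; set G := pairing g v; set T := a * M.
set U := a * (P1 - P2).
lra.
Qed.
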